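(* Let $c\ge 0$, $R>0$, $R\neq c$, and let $\mathcal{C}:x^2+y^2=R^2$. Let $\mathcal{D}$ be the ellipse $\frac{x^2}{(R^2+c^2)^2/(4R^2)}+\frac{y^2}{(R^2-c^2)^2/(4R^2)}=1$, which is centered at the origin with foci $(\pm c,0)$. Suppose some nondegenerate triangle inscribed in $\mathcal{C}$ is circumscribed about $\mathcal{D}$, and let $\mathcal{P}$ be the family of all such triangles. Then for every $\triangle ABC\in\mathcal{P}$, the three vertices of the tangential triangle of $\triangle ABC$ lie on the fixed ellipse $$\frac{x^2}{\frac{4R^6}{(R^2+c^2)^2}}+\frac{y^2}{\frac{4R^6}{(R^2-c^2)^2}}=1,$$ which is centered at the center of $\mathcal{D}$.
   Context: A triangle is circumscribed about a conic if each of its three sidelines is tangent to the conic. The tangential triangle of a non-right triangle $ABC$ is the triangle formed by the tangent lines to the circumcircle of $\triangle ABC$ at $A$, $B$, $C$. *)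

(* Defs.v *)
From Stdlib Require Import Reals Lra.
Open Scope R_scope.

Definition point := (R * R)%type.

Definition on_circle (r : R) (P : point) : Prop :=
  fst P ^ 2 + snd P ^ 2 = r ^ 2.

Definition on_ellipse (a2 b2 : R) (P : point) : Prop :=
  fst P ^ 2 / a2 + snd P ^ 2 / b2 = 1.

Definition on_line (A B P : point) : Prop :=
  exists t : R, P = (fst A + t * (fst B - fst A), snd A + t * (snd B - snd A)).

Definition line_tangent_ellipse (a2 b2 : R) (A B : point) : Prop :=
  exists! P : point, on_line A B P /\ on_ellipse a2 b2 P.

Definition nondegenerate (A B C : point) : Prop :=
  (fst B - fst A) * (snd C - snd A) - (snd B - snd A) * (fst C - fst A) <> 0.

Definition on_circle_tangent (A P : point) : Prop :=
  (fst P - fst A) * fst A + (snd P - snd A) * snd A = 0.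

Definition on_D (c r : R) (P : point) : Prop :=
  on_ellipse ((r ^ 2 + c ^ 2) ^ 2 / (4 * r ^ 2)) ((r ^ 2 - c ^ 2) ^ 2 / (4 * r ^ 2)) P.

Definition in_family (c r : R) (A B C : point) : Prop :=
  nondegenerate A B C /\
  on_circle r A /\ on_circle r B /\ on_circle r C /\
  line_tangent_ellipse ((r ^ 2 + c ^ 2) ^ 2 / (4 * r ^ 2)) ((r ^ 2 - c ^ 2) ^ 2 / (4 * r ^ 2)) B C /\
  line_tangent_ellipse ((r ^ 2 + c ^ 2) ^ 2 / (4 * r ^ 2)) ((r ^ 2 - c ^ 2) ^ 2 / (4 * r ^ 2)) C A /\
  line_tangent_ellipse ((r ^ 2 + c ^ 2) ^ 2 / (4 * r ^ 2)) ((r ^ 2 - c ^ 2) ^ 2 / (4 * r ^ 2)) A B.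

Definition on_E (c r : R) (P : point) : Prop :=
  on_ellipse (4 * r ^ 6 / (r ^ 2 + c ^ 2) ^ 2) (4 * r ^ 6 / (r ^ 2 - c ^ 2) ^ 2) P.

(* Main.v *)
Require Import Defs.
From Stdlib Require Import Reals Lra Lia Psatz.
Open Scope R_scope.

Lemma pow2_pos (x : R) : x <> 0 -> 0 < x ^ 2.
Proof. intro h. simpl. rewrite Rmult_1_r. destruct (Rlt_or_le x 0); [nra|]. destruct H; [nra| congruence]. Qed.

Lemma ell_iff (a2 b2 x y : R) : 0 < a2 -> 0 < b2 ->
  (x ^ 2 / a2 + y ^ 2 / b2 = 1 <-> b2 * x ^ 2 + a2 * y ^ 2 = a2 * b2).
Proof.
  intros ha hb.
  replace (x ^ 2 / a2 + y ^ 2 / b2) with ((b2 * x ^ 2 + a2 * y ^ 2) / (a2 * b2)) by (field; lra).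
  split; intro H.
  - apply (Rmult_eq_compat_r (a2 * b2)) in H. field_simplify in H; lra.
  - rewrite H. field. lra.
Qed.

Lemma tangent_disc (a2 b2 : R) (B C : point) :
  0 < a2 -> 0 < b2 -> B <> C ->
  line_tangent_ellipse a2 b2 B C ->
  a2 * (snd C - snd B) ^ 2 + b2 * (fst C - fst B) ^ 2 =
  (fst B * (snd C - snd B) - snd B * (fst C - fst B)) ^ 2.
Proof.
  destruct B as [B1 B2], C as [C1 C2]; simpl.
  intros ha hb hBC [P [[[t0 Ht0] HP] Huniq]].
  set (d1 := C1 - B1) in *. set (d2 := C2 - B2) in *.
  assert (hd : d1 <> 0 \/ d2 <> 0).
  { destruct (Req_dec d1 0) as [e1|e1]; [|now left].
    destruct (Req_dec d2 0) as [e2|e2]; [|now right].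
    exfalso; apply hBC; unfold d1, d2 in *; f_equal; lra. }
  assert (hal : 0 < b2 * d1 ^ 2 + a2 * d2 ^ 2).
  { destruct hd as [h|h].
    - assert (0 < d1 ^ 2) by (apply pow2_pos; auto). nra.
    - assert (0 < d2 ^ 2) by (apply pow2_pos; auto). nra. }
  set (al := b2 * d1 ^ 2 + a2 * d2 ^ 2) in *.
  set (be := 2 * (b2 * B1 * d1 + a2 * B2 * d2)).
  set (ga := b2 * B1 ^ 2 + a2 * B2 ^ 2 - a2 * b2).
  assert (Q : forall t, on_ellipse a2 b2 (B1 + t * d1, B2 + t * d2) <->
     al * t ^ 2 + be * t + ga = 0).
  { intro t; unfold on_ellipse; cbn [fst snd].
    rewrite (ell_iff a2 b2 _ _ ha hb).
    unfold al, be, ga. split; intro H; nra. }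
  subst P. simpl in HP.
  apply Q in HP.
  set (t1 := - be / al - t0).
  assert (Ht1 : on_ellipse a2 b2 (B1 + t1 * d1, B2 + t1 * d2)).
  { apply Q. rewrite <- HP. unfold t1. field. lra. }
  assert (E := Huniq (B1 + t1 * d1, B2 + t1 * d2)).
  assert (Eq : (B1 + t0 * d1, B2 + t0 * d2) = (B1 + t1 * d1, B2 + t1 * d2)).
  { apply E. split; [|exact Ht1]. exists t1. reflexivity. }
  injection Eq as e1 e2.
  assert (tt : t0 = t1).
  { destruct hd as [h|h].
    - apply (Rmult_eq_reg_r d1); auto; lra.
    - apply (Rmult_eq_reg_r d2); auto; lra. }
  assert (hbe : be = - 2 * al * t0).
  { unfold t1 in tt. assert (h : - be / al = 2 * t0) by lra.
    replace be with (- (al * (- be / al))) by (field; lra). rewrite h. ring. }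
  assert (disc : be ^ 2 - 4 * al * ga = 0).
  { rewrite hbe. replace ga with (- al * t0 ^ 2 - be * t0) by lra. rewrite hbe. ring. }
  assert (idn : be ^ 2 - 4 * al * ga = 4 * a2 * b2 *
     ((a2 * d2 ^ 2 + b2 * d1 ^ 2) - (B1 * d2 - B2 * d1) ^ 2)).
  { unfold be, al, ga. ring. }
  rewrite idn in disc.
  assert (4 * a2 * b2 <> 0) by nra.
  assert (Z : (a2 * d2 ^ 2 + b2 * d1 ^ 2) - (B1 * d2 - B2 * d1) ^ 2 = 0).
  { apply (Rmult_eq_reg_l (4*a2*b2)); auto; lra. }
  lra.
Qed.

Lemma side_lemma (c r : R) (hc : 0 <= c) (hr : 0 < r) (hrc : r <> c) (X Y T : point) :
  X <> Y -> on_circle r X -> on_circle r Y ->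
  line_tangent_ellipse ((r ^ 2 + c ^ 2) ^ 2 / (4 * r ^ 2)) ((r ^ 2 - c ^ 2) ^ 2 / (4 * r ^ 2)) X Y ->
  on_circle_tangent X T -> on_circle_tangent Y T -> on_E c r T.
Proof.
  intros hXY hX hY htan hTX hTY.
  assert (hrc2 : r ^ 2 - c ^ 2 <> 0).
  { intro h. assert ((r - c) * (r + c) = 0) by (rewrite <- h; ring).
    apply Rmult_integral in H as [H|H]; lra. }
  assert (hr2 : 0 < r ^ 2) by (apply pow2_pos; lra).
  assert (hpc : 0 < r ^ 2 + c ^ 2) by nra.
  assert (ha : 0 < (r ^ 2 + c ^ 2) ^ 2 / (4 * r ^ 2)).
  { apply Rdiv_lt_0_compat; [apply pow2_pos; lra | lra]. }
  assert (hb : 0 < (r ^ 2 - c ^ 2) ^ 2 / (4 * r ^ 2)).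
  { apply Rdiv_lt_0_compat; [apply pow2_pos; auto | lra]. }
  pose proof (tangent_disc _ _ X Y ha hb hXY htan) as K.
  set (a2 := (r ^ 2 + c ^ 2) ^ 2 / (4 * r ^ 2)) in *.
  set (b2 := (r ^ 2 - c ^ 2) ^ 2 / (4 * r ^ 2)) in *.
  destruct X as [B1 B2], Y as [C1 C2], T as [T1 T2].
  unfold on_circle, on_circle_tangent in *; cbn [fst snd] in *.
  set (d1 := C1 - B1) in *. set (d2 := C2 - B2) in *.
  set (k := B1 * d2 - B2 * d1) in *.
  assert (TB : T1 * B1 + T2 * B2 = r ^ 2) by nra.
  assert (TC : T1 * C1 + T2 * C2 = r ^ 2) by nra.
  assert (Td : T1*d1 + T2*d2 = 0) by (unfold d1, d2; lra).
  assert (k1 : k * T1 = d2 * r ^ 2).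
  { transitivity (d2*(T1*B1+T2*B2) - B2*(T1*d1+T2*d2)); [unfold k; ring | rewrite Td, TB; ring]. }
  assert (k2 : k * T2 = - d1 * r ^ 2).
  { transitivity (-d1*(T1*B1+T2*B2) + B1*(T1*d1+T2*d2)); [unfold k; ring | rewrite Td, TB; ring]. }
  assert (hk : k <> 0).
  { intro h0. rewrite h0 in k1, k2. apply hXY.
    assert (d2 = 0) by nra. assert (d1 = 0) by nra.
    unfold d1, d2 in *. f_equal; lra. }
  assert (M : a2 * T1 ^ 2 + b2 * T2 ^ 2 = r ^ 4).
  { apply (Rmult_eq_reg_l (k ^ 2)); [|apply pow_nonzero; auto].
    replace (k ^ 2 * (a2 * T1 ^ 2 + b2 * T2 ^ 2)) with
      (a2 * (k * T1) ^ 2 + b2 * (k * T2) ^ 2) by ring.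
    rewrite k1, k2, <- K. ring. }
  unfold on_E, on_ellipse; cbn [fst snd].
  unfold a2, b2 in M.
  assert (r ^ 4 <> 0) by (apply pow_nonzero; lra).
  transitivity (((r ^ 2 + c ^ 2) ^ 2 / (4 * r ^ 2) * T1 ^ 2 +
      (r ^ 2 - c ^ 2) ^ 2 / (4 * r ^ 2) * T2 ^ 2) / r ^ 4).
  - field. repeat split; lra.
  - rewrite M. field. lra.
Qed.

Theorem theorem5p10 (c r : R) (hc : 0 <= c) (hr : 0 < r) (hrc : r <> c)
  (hP : exists A B C : point, in_family c r A B C) :
  forall A B C : point, in_family c r A B C ->
    (forall T : point, on_circle_tangent B T -> on_circle_tangent C T -> on_E c r T) /\
    (forall T : point, on_circle_tangent C T -> on_circle_tangent A T -> on_E c r T) /\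
    (forall T : point, on_circle_tangent A T -> on_circle_tangent B T -> on_E c r T).
Proof.
  intros A B C [hnd [hA [hB [hC [t1 [t2 t3]]]]]].
  assert (AB : A <> B) by (intro e; subst; apply hnd; ring).
  assert (BC : B <> C) by (intro e; subst; apply hnd; ring).
  assert (CA : C <> A) by (intro e; subst; apply hnd; ring).
  split; [|split]; intros T h1 h2.
  - exact (side_lemma c r hc hr hrc B C T BC hB hC t1 h1 h2).
  - exact (side_lemma c r hc hr hrc C A T CA hC hA t2 h1 h2).
  - exact (side_lemma c r hc hr hrc A B T AB hA hB t3 h1 h2).
Qed.
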